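(* Let $((x_1,\hat{y}_1,\hat{\gamma}_1), \dots, (x_T,\hat{y}_T,\hat{\gamma}_T))$ be a sequence of training examples $x_t \in \mathbb{R}^n$ together with label estimates $\hat{y}_t \in \{\pm 1\}$ and margin estimates $\hat{\gamma}_t > 0$, sorted in descending order of the margin estimates, and with $\|x_t\| \leq R$ for all $t \in \{1,\ldots,T\}$. Let $\hat{\gamma}=\min (\hat{\gamma}_1,\dots,\hat{\gamma}_T)=\hat{\gamma}_T$ and $K=\lceil R/\hat{\gamma} \rceil-1$. Suppose there exists a vector $u \in \mathbb{R}^n$ such that $\hat{y}_t \langle u, x_t\rangle \geq \hat{\gamma}$ for all $t$. Suppose the examples are divided into $K$ regions $1,\ldots,K$ such that every example $x_{t}$ in region $k$ satisfies $\hat{y}_{t}\langle x_{t}, u\rangle \geq k\hat{\gamma}$. Run the perceptron algorithm on this sequence (in the given order, with labels $\hat y_t$). Let $\varepsilon_1,\ldots,\varepsilon_K$ denote the number of mistakes made by the perceptron on the examples in each of the $K$ regions, let $\varepsilon=\sum_{k=1}^K \varepsilon_k$ be the total number of mistakes, and let $\varepsilon_s=\sqrt{\frac{1}{K}\sum_{k=1}^K (\varepsilon_k-\varepsilon/K)^2}$ be the standard deviation of $\{\varepsilon_1,\ldots,\varepsilon_K\}$. Then \[ \sqrt{\varepsilon} \leq \frac{R\|u\| + \sqrt{R^2\|u\|^2+\varepsilon_s K(K+1)^2\sqrt{K-1}\,\hat{\gamma}^2}}{\hat{\gamma}(K+1)} . \]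
   Context: The perceptron algorithm on a sequence $(x_1,\hat y_1),\ldots,(x_T,\hat y_T)$ with $x_t\in\mathbb{R}^n$, $\hat y_t\in\{\pm1\}$: start with $w_1 = 0$; at step $t$, predict the label $\mathrm{sign}(\langle w_t, x_t\rangle)$; a mistake occurs at step $t$ if $\hat y_t \langle w_t, x_t\rangle \le 0$, in which case $w_{t+1} = w_t + \hat y_t x_t$; otherwise $w_{t+1} = w_t$. Here $\langle\cdot,\cdot\rangle$ is the Euclidean inner product and $\|\cdot\|$ the Euclidean norm. *)

(* Defs.v *)
From mathcomp Require Import all_boot all_order all_algebra.
From mathcomp Require Import reals.
Set Implicit Arguments. Unset Strict Implicit. Unset Printing Implicit Defensive.
Import Order.TTheory GRing.Theory Num.Theory.
Local Open Scope ring_scope.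

Definition dotv (R : realType) (n : nat) (u v : 'rV[R]_n) : R :=
  \sum_(i < n) u ord0 i * v ord0 i.
Definition normv (R : realType) (n : nat) (u : 'rV[R]_n) : R :=
  Num.sqrt (dotv u u).

Fixpoint perc_w (R : realType) (n : nat) (x : nat -> 'rV[R]_n) (y : nat -> R)
    (t : nat) : 'rV[R]_n :=
  match t with
  | 0 => 0
  | t'.+1 => if y t' * dotv (perc_w x y t') (x t') <= 0
             then perc_w x y t' + y t' *: x t' else perc_w x y t'
  end.

Definition perc_mistake (R : realType) (n : nat) (x : nat -> 'rV[R]_n)
    (y : nat -> R) (t : nat) : bool :=
  y t * dotv (perc_w x y t) (x t) <= 0.

Definition region_mistakes (R : realType) (n T : nat) (x : nat -> 'rV[R]_n)
    (y : nat -> R) (reg : nat -> nat) (k : nat) : nat :=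
  \sum_(t < T | (reg t == k) && perc_mistake x y t) 1%N.

Definition total_mistakes (R : realType) (n T : nat) (x : nat -> 'rV[R]_n)
    (y : nat -> R) (reg : nat -> nat) (K : nat) : nat :=
  \sum_(1 <= k < K.+1) region_mistakes T x y reg k.

Definition mistakes_std (R : realType) (n T : nat) (x : nat -> 'rV[R]_n)
    (y : nat -> R) (reg : nat -> nat) (K : nat) : R :=
  Num.sqrt (K%:R^-1 * \sum_(1 <= k < K.+1)
     ((region_mistakes T x y reg k)%:R
        - (total_mistakes T x y reg K)%:R / K%:R) ^+ 2).

(* Main.v *)
Require Import Defs.
From mathcomp Require Import all_boot all_order all_algebra.
From mathcomp Require Import reals ring lra.
Import Order.TTheory GRing.Theory Num.Theory.
Local Open Scope ring_scope.

Lemma CS2 (R : rcfType) (I : Type) (r : seq I) (a b : I -> R) :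
  (\sum_(i <- r) a i * b i) ^+ 2 <=
  (\sum_(i <- r) a i ^+ 2) * (\sum_(i <- r) b i ^+ 2).
Proof.
have H : 0 <= \sum_(i <- r) \sum_(j <- r) (a i * b j - a j * b i) ^+ 2.
  by apply: sumr_ge0 => i _; apply: sumr_ge0 => j _; apply: sqr_ge0.
have E : \sum_(i <- r) \sum_(j <- r) (a i * b j - a j * b i) ^+ 2 =
  \sum_(i <- r) \sum_(j <- r) (a i ^+ 2 * b j ^+ 2)
  + \sum_(i <- r) \sum_(j <- r) (b i ^+ 2 * a j ^+ 2)
  - (\sum_(i <- r) \sum_(j <- r) ((a i * b i) * (a j * b j))) *+ 2.
  rewrite -big_split -sumrMnl -sumrB; apply: eq_bigr => i _.
  rewrite -big_split -sumrMnl -sumrB; apply: eq_bigr => j _.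
  rewrite /=; ring.
rewrite E -!big_distrlr /= (mulrC (\sum_(i <- r) b i ^+ 2)) in H.
rewrite expr2; lra.
Qed.

Lemma CS (R : rcfType) (I : Type) (r : seq I) (a b : I -> R) :
  \sum_(i <- r) a i * b i <=
  Num.sqrt (\sum_(i <- r) a i ^+ 2) * Num.sqrt (\sum_(i <- r) b i ^+ 2).
Proof.
have hA : 0 <= \sum_(i <- r) a i ^+ 2 by apply: sumr_ge0 => i _; apply: sqr_ge0.
rewrite -sqrtrM //; apply: le_trans (ler_norm _) _.
rewrite -sqrtr_sqr ler_sqrt; first exact: CS2.
by apply: mulr_ge0 => //; apply: sumr_ge0 => i _; apply: sqr_ge0.
Qed.

Lemma dotvDl (R : realType) n (a b c : 'rV[R]_n) : dotv (a + b) c = dotv a c + dotv b c.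
Proof. by rewrite /dotv -big_split; apply: eq_bigr => i _; rewrite mxE mulrDl. Qed.
Lemma dotvZl (R : realType) n (k : R) (a b : 'rV[R]_n) : dotv (k *: a) b = k * dotv a b.
Proof. by rewrite /dotv mulr_sumr; apply: eq_bigr => i _; rewrite mxE mulrA. Qed.
Lemma dotvZr (R : realType) n (k : R) (a b : 'rV[R]_n) : dotv a (k *: b) = k * dotv a b.
Proof. by rewrite /dotv mulr_sumr; apply: eq_bigr => i _; rewrite mxE mulrCA. Qed.
Lemma dotvC (R : realType) n (a b : 'rV[R]_n) : dotv a b = dotv b a.
Proof. by rewrite /dotv; apply: eq_bigr => i _; rewrite mulrC. Qed.
Lemma dotv0 (R : realType) n (a : 'rV[R]_n) : dotv 0 a = 0.
Proof. by rewrite /dotv big1 // => i _; rewrite mxE mul0r. Qed.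
Lemma dotv_ge0 (R : realType) n (a : 'rV[R]_n) : 0 <= dotv a a.
Proof. by rewrite /dotv; apply: sumr_ge0 => i _; rewrite -expr2 sqr_ge0. Qed.
Lemma normv_sqr (R : realType) n (a : 'rV[R]_n) : normv a ^+ 2 = dotv a a.
Proof. by rewrite /normv sqr_sqrtr // dotv_ge0. Qed.
Lemma normv_ge0 {R : realType} {n} (a : 'rV[R]_n) : 0 <= normv a.
Proof. exact: sqrtr_ge0. Qed.
Lemma dotv_CS (R : realType) n (a b : 'rV[R]_n) : dotv a b <= normv a * normv b.
Proof.
rewrite /normv /dotv.
have := @CS R _ (index_enum 'I_n) (fun i => a ord0 i) (fun i => b ord0 i).
by rewrite !(eq_bigr _ (fun i _ => expr2 _)).
Qed.

Lemma perc_norm (R : realType) n (x : nat -> 'rV[R]_n) (y : nat -> R) T Rb :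
  (forall t, (t < T)%N -> y t = 1 \/ y t = -1) ->
  (forall t, (t < T)%N -> normv (x t) <= Rb) ->
  forall t, (t <= T)%N ->
  dotv (perc_w x y t) (perc_w x y t) <=
    (\sum_(0 <= s < t) (if perc_mistake x y s then 1 else 0 : R)) * Rb ^+ 2.
Proof.
move=> hy hx; elim=> [|t IH] ht.
  by rewrite big_geq // mul0r /= dotv0.
have htT : (t < T)%N by [].
have IH' := IH (ltnW ht).
rewrite big_nat_recr //= -/(perc_mistake x y t).
case: ifP => hm.
  have hm' : y t * dotv (perc_w x y t) (x t) <= 0 by [].
  rewrite dotvDl !(dotvC _ _ _ (_ + _)) !dotvDl !dotvZl (dotvC _ _ (x t)) !dotvZr.
  have hyy : y t * (y t * dotv (x t) (x t)) = dotv (x t) (x t).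
    by case: (hy t htT) => ->; ring.
  have hxx : dotv (x t) (x t) <= Rb ^+ 2.
    rewrite -normv_sqr; have := hx t htT; have := normv_ge0 (x t : 'rV[R]_n).
    move=> h1 h2; rewrite !expr2; nra.
  nra.
by rewrite addr0.
Qed.

Lemma perc_u (R : realType) n (x : nat -> 'rV[R]_n) (y : nat -> R) T (u : 'rV[R]_n)
  (reg : nat -> nat) (g : R) :
  (forall t, (t < T)%N -> (reg t)%:R * g <= y t * dotv (x t) u) ->
  forall t, (t <= T)%N ->
  g * (\sum_(0 <= s < t) (if perc_mistake x y s then (reg s)%:R else 0 : R))
    <= dotv (perc_w x y t) u.
Proof.
move=> hr; elim=> [|t IH] ht.
  by rewrite big_geq // mulr0 /= dotv0.
have htT : (t < T)%N by [].
have IH' := IH (ltnW ht).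
rewrite big_nat_recr //= -/(perc_mistake x y t).
case: ifP => hm.
  rewrite dotvDl dotvZl; have := hr t htT; lra.
by rewrite addr0.
Qed.

Lemma sum_k (R : realType) K : \sum_(1 <= k < K.+1) (k%:R : R) = K%:R * (K%:R + 1) / 2.
Proof.
elim: K => [|K IH]; first by rewrite big_geq // mul0r mul0r.
rewrite big_nat_recr //= IH -[K.+1]addn1 natrD; by field.
Qed.

Lemma partition_reg (R : realType) n (x : nat -> 'rV[R]_n) (y : nat -> R) T
  (reg : nat -> nat) K (F : nat -> R) :
  (forall t, (t < T)%N -> (1 <= reg t <= K)%N) ->
  \sum_(0 <= s < T) (if perc_mistake x y s then F (reg s) else 0) =
  \sum_(1 <= k < K.+1) F k * (region_mistakes T x y reg k)%:R.
Proof.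
move=> hreg.
under [RHS]eq_bigr => k _ do
  rewrite /region_mistakes natr_sum mulr_sumr big_mkcond /=.
rewrite exchange_big /= big_mkord; apply: eq_bigr => t _.
case: ifP => hm.
  rewrite (bigD1_seq (reg t)) /=; last exact: iota_uniq.
    rewrite eqxx /= mulr1 big1 ?addr0 // => k hk.
    by rewrite eq_sym (negbTE hk).
  by rewrite mem_index_iota; apply: hreg.
by rewrite big1 // => k _; rewrite andbF.
Qed.

Theorem theorem2 (R : realType) (n T : nat)
    (x : nat -> 'rV[R]_n) (y : nat -> R) (gam : nat -> R)
    (Rb : R) (u : 'rV[R]_n) (K : nat) (reg : nat -> nat) :
  (0 < T)%N ->
  (forall t, (t < T)%N -> y t = 1 \/ y t = -1) ->
  (forall t, (t < T)%N -> 0 < gam t) ->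
  (forall s t, (s <= t)%N -> (t < T)%N -> gam t <= gam s) ->
  (forall t, (t < T)%N -> normv (x t) <= Rb) ->
  let ghat := gam T.-1 in
  (K%:Z = Num.ceil (Rb / ghat) - 1)%R ->
  (forall t, (t < T)%N -> ghat <= y t * dotv u (x t)) ->
  (forall t, (t < T)%N -> (1 <= reg t <= K)%N) ->
  (forall t, (t < T)%N -> (reg t)%:R * ghat <= y t * dotv (x t) u) ->
  let eps := (total_mistakes T x y reg K)%:R in
  let eps_s := mistakes_std T x y reg K in
  Num.sqrt eps <=
    (Rb * normv u
     + Num.sqrt (Rb ^+ 2 * normv u ^+ 2
                 + eps_s * K%:R * (K%:R + 1) ^+ 2 * Num.sqrt (K%:R - 1) * ghat ^+ 2))
    / (ghat * (K%:R + 1)).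
Proof.
move=> hT hy hg hmono hx ghat hKc hu hreg hreg2; cbv zeta.
set eps := (total_mistakes T x y reg K)%:R.
set eps_s := mistakes_std T x y reg K.
have hg0 : 0 < ghat by apply: hg; rewrite prednK.
have hK1 : (1 <= K)%N by case/andP: (hreg 0%N hT) => h1 h2; apply: leq_trans h2.
have hKr : 1 <= (K%:R : R) by rewrite ler1n.
have hRb : 0 <= Rb by apply: le_trans (hx 0%N hT); apply: normv_ge0.
set e := fun k => (region_mistakes T x y reg k)%:R : R.
set N := \sum_(0 <= s < T) (if perc_mistake x y s then 1 else 0 : R).
set S := \sum_(0 <= s < T) (if perc_mistake x y s then (reg s)%:R else 0 : R).
have HN : N = eps.
  rewrite /N (@partition_reg R n x y T reg K (fun _ => 1) hreg) /eps /total_mistakes natr_sum.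
  by apply: eq_bigr => k _; rewrite mul1r.
have HS : S = \sum_(1 <= k < K.+1) k%:R * e k.
  by rewrite /S (@partition_reg R n x y T reg K (fun k => k%:R) hreg).
have heps0 : 0 <= eps by rewrite ler0n.
set w := perc_w x y T.
have hw2 : dotv w w <= eps * Rb ^+ 2 by rewrite -HN; exact: (@perc_norm R n x y T Rb hy hx T (leqnn T)).
have hwu : ghat * S <= dotv w u by exact: (@perc_u R n x y T u reg ghat hreg2 T (leqnn T)).
have hnw : normv w <= Num.sqrt eps * Rb.
  rewrite /normv -(ger0_norm hRb) -sqrtr_sqr -sqrtrM // ler_sqrt //.
  by apply: mulr_ge0 => //; apply: sqr_ge0.
set b := Rb * normv u.
have hb : 0 <= b by apply: mulr_ge0 => //; apply: normv_ge0.
have h1 : ghat * S <= Num.sqrt eps * b.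
  apply: (le_trans hwu); apply: (le_trans (dotv_CS _ _ w u)).
  rewrite /b mulrA; apply: ler_wpM2r; first exact: normv_ge0.
  exact: hnw.

have hKpos : 0 < (K%:R : R) by apply: lt_le_trans hKr.
have hK0 : (K%:R : R) != 0 by rewrite gt_eqF.
have hsum_e : \sum_(1 <= k < K.+1) e k = eps by rewrite /eps /total_mistakes natr_sum.
set c : R := (K%:R + 1) / 2.
set mu : R := eps / K%:R.
have hc : \sum_(1 <= k < K.+1) (c * mu) = c * mu * K%:R.
  by rewrite sumr_const_nat subn1 /= mulr_natr.
set D := \sum_(1 <= k < K.+1) (k%:R - c) * (e k - mu).
have hD : S = c * eps + D.
  rewrite /D (eq_bigr (fun k => k%:R * e k - c * e k - mu * k%:R + c * mu)); last first.
    by move=> k _; ring.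
  rewrite !big_split /= !sumrN hc -!mulr_sumr hsum_e sum_k -HS /c /mu.
  by field.
set A := \sum_(1 <= k < K.+1) (k%:R - c) ^+ 2.
set B := \sum_(1 <= k < K.+1) (e k - mu) ^+ 2.
have hCS : - D <= Num.sqrt A * Num.sqrt B.
  have := @CS R _ (index_iota 1 K.+1) (fun k => k%:R - c) (fun k => - (e k - mu)).
  rewrite (eq_bigr (fun k => - ((k%:R - c) * (e k - mu)))); last by move=> k _; rewrite mulrN.
  have -> : \sum_(1 <= k < K.+1) (- (e k - mu)) ^+ 2 = B.
    by apply: eq_bigr => k _; rewrite sqrrN.
  by rewrite sumrN.
have hA0 : 0 <= A by apply: sumr_ge0 => k _; apply: sqr_ge0.
have hA : A <= K%:R * ((K%:R - 1) / 2) ^+ 2.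
  apply: (le_trans (ler_sum_nat (G := fun _ => ((K%:R - 1) / 2) ^+ 2) _)).
    move=> k /andP [hk1n hk2n].
    have hk1 : 1 <= (k%:R : R) by rewrite ler1n.
    have hk2 : (k%:R : R) <= K%:R by rewrite ler_nat -ltnS.
    have hd1 : 0 <= (K%:R - 1) / 2 - (k%:R - c) by rewrite /c; lra.
    have hd2 : 0 <= (K%:R - 1) / 2 + (k%:R - c) by rewrite /c; lra.
    have := mulr_ge0 hd1 hd2; rewrite !expr2; nra.
  by rewrite sumr_const_nat subn1 /= mulr_natl.
have hes : 0 <= eps_s by apply: sqrtr_ge0.
have hB : B = K%:R * eps_s ^+ 2.
  rewrite /eps_s /mistakes_std sqr_sqrtr; last first.
    apply: mulr_ge0; first by rewrite invr_ge0 ler0n.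
    by apply: sumr_ge0 => k _; apply: sqr_ge0.
  by rewrite mulrA mulfV // mul1r.
set q := Num.sqrt (K%:R - 1 : R).
have hq0 : 0 <= q by apply: sqrtr_ge0.
have hsq : q ^+ 2 = K%:R - 1 by rewrite /q sqr_sqrtr // subr_ge0.
set E := eps_s * K%:R * (K%:R + 1) * q / 2.
have hE0 : 0 <= E.
  apply: mulr_ge0; last by rewrite invr_ge0 ler0n.
  apply: mulr_ge0 => //; apply: mulr_ge0; last lra.
  by apply: mulr_ge0 => //; apply: ltW.
have hE : Num.sqrt A * Num.sqrt B <= E.
  rewrite -sqrtrM // -(ger0_norm hE0) -sqrtr_sqr ler_sqrt; last exact: sqr_ge0.
  have hE2 : E ^+ 2 = eps_s ^+ 2 * K%:R ^+ 2 * (K%:R + 1) ^+ 2 * q ^+ 2 / 4.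
    by rewrite /E; field.
  rewrite hE2 hsq hB.
  have hK1' : 0 <= (K%:R : R) - 1 by lra.
  have hkey : ((K%:R : R) - 1) ^+ 2 <= (K%:R + 1) ^+ 2 * (K%:R - 1).
    rewrite !expr2; nra.
  have hes2 : 0 <= eps_s ^+ 2 by apply: sqr_ge0.
  have h3 : A * (K%:R * eps_s ^+ 2) <= K%:R * ((K%:R - 1) / 2) ^+ 2 * (K%:R * eps_s ^+ 2).
    apply: ler_wpM2r => //; apply: mulr_ge0 => //; apply: ltW.
  apply: (le_trans h3).
  have h4 : 0 <= (K%:R : R) ^+ 2 * eps_s ^+ 2 / 4.
    by apply: mulr_ge0; [apply: mulr_ge0; [apply: sqr_ge0|] | lra].
  have := ler_wpM2l h4 hkey.
  have -> : K%:R * ((K%:R - 1) / 2) ^+ 2 * (K%:R * eps_s ^+ 2) =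
    (K%:R : R) ^+ 2 * eps_s ^+ 2 / 4 * (K%:R - 1) ^+ 2 by field.
  have -> : eps_s ^+ 2 * K%:R ^+ 2 * (K%:R + 1) ^+ 2 * (K%:R - 1) / 4 =
    (K%:R : R) ^+ 2 * eps_s ^+ 2 / 4 * ((K%:R + 1) ^+ 2 * (K%:R - 1)) by field.
  by [].
set s := Num.sqrt eps.
have hs0 : 0 <= s by apply: sqrtr_ge0.
have hs2 : s ^+ 2 = eps by rewrite /s sqr_sqrtr.
have hDE : - D <= E by apply: le_trans hCS hE.
have hc0 : 0 < c by rewrite /c; lra.
have hineq : ghat * c * s ^+ 2 <= b * s + ghat * E.
  have h5 := ler_wpM2l (ltW hg0) hDE.
  rewrite hD in h1; have h1s : ghat * (c * eps + D) <= s * b := h1.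
  rewrite hs2; nra.
have hden : 0 < ghat * (K%:R + 1) by apply: mulr_gt0 => //; lra.
rewrite ler_pdivlMr // -exprMn.
have hZ : eps_s * K%:R * (K%:R + 1) ^+ 2 * q * ghat ^+ 2 = 4 * (ghat * c) * (ghat * E).
  by rewrite /c /E; field.
rewrite hZ.
have hal : 0 < ghat * c by apply: mulr_gt0.
have hsplit : s * (ghat * (K%:R + 1)) = 2 * (ghat * c) * s by rewrite /c; field.
rewrite hsplit.
set z := 2 * (ghat * c) * s - b.
have hzz : 2 * (ghat * c) * s = b + z by rewrite /z; ring.
rewrite hzz lerD2l.
have hsq0 := sqrtr_ge0 (b ^+ 2 + 4 * (ghat * c) * (ghat * E)).
case: (lerP z 0) => hz; first by apply: le_trans hz hsq0.
rewrite -(ger0_norm (ltW hz)) -sqrtr_sqr ler_sqrt; last first.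
  apply: addr_ge0; first exact: sqr_ge0.
  by apply: mulr_ge0; [apply: mulr_ge0; [lra|apply: ltW]|apply: mulr_ge0; [apply: ltW|]].
rewrite /z; have h6 := ler_wpM2l (ltW hal) hineq.
rewrite !expr2 in h6 *; rewrite -/b; nra.
Qed.
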